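(* Let $n\ge 1$ and let $P\in\mathbb{R}^{n\times n}$ be a row-stochastic matrix. Let $P_S:\{w\in\mathbb{R}^n: w_1+\dots+w_n=0\}\to\mathbb{R}^n$ denote the restriction of $P$ to the subspace of vectors with mean zero, and suppose $\|P_S\|<1$. Let $w\in\mathbb{R}^n$ be a global maximizer of $$L(w)=\langle w,Pw\rangle-\sum_{i=1}^n\log\Big(\sum_{j=1}^n\exp(w_iw_j)\Big)$$ over $\mathbb{R}^n$. If $$\left|\left\langle w,\frac{\mathbf{1}}{\sqrt n}\right\rangle\right|\le\frac{1-\|P_S\|}{3}\,\|w\|,$$ where $\mathbf{1}=(1,1,\dots,1)\in\mathbb{R}^n$, then $$\|w\|^2\le\frac{2n\log n}{1-\|P_S\|}.$$
   Context: A matrix is row-stochastic if its entries are non-negative and each row sums to $1$. $\|\cdot\|$ denotes the Euclidean norm on vectors and $\langle\cdot,\cdot\rangle$ the standard inner product; $\|P_S\|$ is the operator norm of $P_S$ with respect to the Euclidean norms on its domain (the mean-zero subspace) and on $\mathbb{R}^n$, i.e. $\|P_S\|=\sup\{\|Pu\|:\ u_1+\dots+u_n=0,\ \|u\|=1\}$. *)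

(* Defs.v *)
From HB Require Import structures.
From mathcomp Require Import all_boot all_order all_algebra.
From mathcomp Require Import all_classical all_reals all_analysis.
Set Implicit Arguments. Unset Strict Implicit. Unset Printing Implicit Defensive.
Import Order.TTheory GRing.Theory Num.Theory.
Local Open Scope ring_scope.
Local Open Scope classical_set_scope.

Section Defs.
Variables (R : realType) (n : nat).

Definition row_stochastic (P : 'M[R]_n) : Prop :=
  (forall i j, 0 <= P i j) /\ (forall i, \sum_(j < n) P i j = 1).

Definition dotv (u v : 'I_n -> R) : R := \sum_(i < n) u i * v i.

Definition enorm (u : 'I_n -> R) : R := Num.sqrt (dotv u u).

Definition matv (P : 'M[R]_n) (u : 'I_n -> R) : 'I_n -> R :=
  fun i => \sum_(j < n) P i j * u j.

(* operator norm of P restricted to the mean-zero subspace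
   (sup of the empty set is 0, the norm of the zero operator, when n = 1) *)
Definition opnormS (P : 'M[R]_n) : R :=
  sup [set r : R | exists u : 'I_n -> R,
         \sum_(i < n) u i = 0 /\ enorm u = 1 /\ r = enorm (matv P u)].

Definition Lobj (P : 'M[R]_n) (w : 'I_n -> R) : R :=
  dotv w (matv P w) - \sum_(i < n) ln (\sum_(j < n) expR (w i * w j)).

End Defs.

(* Main.v *)
Require Import Defs.
From HB Require Import structures.
From mathcomp Require Import all_boot all_order all_algebra.
From mathcomp Require Import all_classical all_reals all_analysis.
From mathcomp Require Import ring lra.
Set Implicit Arguments. Unset Strict Implicit.
Import Order.TTheory GRing.Theory Num.Theory.
Local Open Scope ring_scope.

Section H.
Variables (R : realType) (n : nat).
Implicit Types (u v w : 'I_n -> R).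

Lemma dotv_ge0 u : 0 <= dotv u u.
Proof. by apply: sumr_ge0 => i _; rewrite -expr2 sqr_ge0. Qed.

Lemma dotv_coord u j : u j * u j <= dotv u u.
Proof.
rewrite /dotv (bigD1 j) //= lerDl.
by apply: sumr_ge0 => i _; rewrite -expr2 sqr_ge0.
Qed.

Lemma enorm_sq u : enorm u ^+ 2 = dotv u u.
Proof. by rewrite /enorm sqr_sqrtr // dotv_ge0. Qed.

Lemma dotv0 u : dotv u u = 0 -> forall j, u j = 0.
Proof.
move=> h j; have := dotv_coord u j; rewrite h => hj.
have : u j * u j = 0 by apply/le_anti; rewrite hj -expr2 sqr_ge0.
by move/eqP; rewrite mulf_eq0 orbb => /eqP.
Qed.

Lemma dotv_scale u v r : dotv (fun i => u i / r) (fun i => v i / r) = dotv u v / r ^+ 2.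
Proof.
rewrite /dotv mulr_suml; apply: eq_bigr => i _.
by rewrite expr2 invfM; ring.
Qed.

Lemma matv_scale (P : 'M[R]_n) v r i : matv P (fun j => v j / r) i = matv P v i / r.
Proof. by rewrite /matv mulr_suml; apply: eq_bigr => j _; rewrite mulrA. Qed.

Lemma matv_bound (P : 'M[R]_n) u : row_stochastic P -> enorm u = 1 ->
  enorm (matv P u) <= Num.sqrt n%:R.
Proof.
move=> [P0 P1] hu.
have hu2 : dotv u u = 1 by rewrite -enorm_sq hu expr1n.
have ub : forall j, -1 <= u j <= 1.
  move=> j; have := dotv_coord u j; rewrite hu2 => h.
  by apply/andP; split; nra.
have mb : forall i, matv P u i * matv P u i <= 1.
  move=> i.
  have h1 : matv P u i <= 1.
    rewrite -(P1 i) /matv; apply: ler_sum => j _.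
    have := P0 i j; have /andP[a b] := ub j; nra.
  have h2 : -1 <= matv P u i.
    rewrite -(P1 i) /matv -sumrN; apply: ler_sum => j _.
    have := P0 i j; have /andP[a b] := ub j; nra.
  nra.
rewrite /enorm ler_sqrt ?ler0n //.
have -> : (n%:R : R) = \sum_(i < n) 1 by rewrite sumr_const card_ord.
by apply: ler_sum => i _; apply: mb.
Qed.

Lemma opn_ub (P : 'M[R]_n) u : row_stochastic P -> \sum_(i < n) u i = 0 -> enorm u = 1 ->
  enorm (matv P u) <= opnormS P.
Proof.
move=> hP hs hu; apply: sup_upper_bound; last by exists u.
split; first by exists (enorm (matv P u)); exists u.
exists (Num.sqrt n%:R) => r [x [hx1 [hx2 ->]]].
exact: matv_bound.
Qed.

Lemma opn_ge0 (P : 'M[R]_n) : row_stochastic P -> 0 <= opnormS P.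
Proof.
move=> hP.
have [[u [hs hu]]|S0] := pselect (exists u : 'I_n -> R, \sum_(i < n) u i = 0 /\ enorm u = 1).
  exact: le_trans (sqrtr_ge0 _) (opn_ub hP hs hu).
rewrite /opnormS.
have -> : ([set r : R | exists u : 'I_n -> R,
         \sum_(i < n) u i = 0 /\ enorm u = 1 /\ r = enorm (matv P u)] = set0)%classic.
  rewrite predeqE => x; split => // -[u [h1 [h2 _]]]; apply: S0; by exists u.
by rewrite sup0.
Qed.

Lemma opn_sq (P : 'M[R]_n) v : row_stochastic P -> \sum_(i < n) v i = 0 ->
  dotv (matv P v) (matv P v) <= opnormS P ^+ 2 * dotv v v.
Proof.
move=> hP hs.
have [c0|cpos] := eqVneq (dotv v v) 0.
  have hv := dotv0 c0.
  have -> : matv P v = fun _ => 0.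
    by apply: funext => i; rewrite /matv big1 // => j _; rewrite hv mulr0.
  by rewrite c0 mulr0 /dotv big1 // => i _; rewrite mulr0.
have c0 : 0 < dotv v v by rewrite lt_def cpos dotv_ge0.
set r := Num.sqrt (dotv v v).
have r0 : 0 < r by rewrite sqrtr_gt0.
have r2 : r ^+ 2 = dotv v v by rewrite sqr_sqrtr // ltW.
set u := fun i => v i / r.
have hus : \sum_(i < n) u i = 0 by rewrite /u -mulr_suml hs mul0r.
have huu : enorm u = 1.
  by rewrite /enorm /u dotv_scale r2 divff // sqrtr1.
have h := opn_ub hP hus huu.
have e1 : enorm (matv P u) ^+ 2 <= opnormS P ^+ 2.
  have := sqrtr_ge0 (dotv (matv P u) (matv P u)); rewrite -/(enorm _) => e0.
  nra.
rewrite enorm_sq /u in e1.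
have e2 : matv P (fun i => v i / r) = fun i => matv P v i / r.
  by apply: funext => i; rewrite matv_scale.
rewrite e2 dotv_scale r2 ler_pdivrMr // in e1.
Qed.

Lemma cross (P : 'M[R]_n) v w : row_stochastic P -> \sum_(i < n) v i = 0 ->
  dotv v v <= dotv w w -> dotv w (matv P v) <= opnormS P * dotv w w.
Proof.
move=> hP hs hvw.
set s := opnormS P; set y := matv P v.
have hy : dotv y y <= s ^+ 2 * dotv w w.
  apply: le_trans (opn_sq hP hs) _; apply: ler_wpM2l => //; exact: sqr_ge0.
have s0 : 0 <= s by exact: opn_ge0.
have [s0e|sn0] := eqVneq s 0.
  rewrite s0e expr0n /= mul0r in hy; rewrite s0e.
  have hy0 : dotv y y = 0 by apply/le_anti; rewrite hy dotv_ge0.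
  by rewrite mul0r /dotv big1 // => i _; rewrite (dotv0 hy0) mulr0.
have sp : 0 < s by rewrite lt_def sn0 s0.
have key : 0 <= s ^+ 2 * dotv w w - 2 * s * dotv w y + dotv y y.
  have -> : s ^+ 2 * dotv w w - 2 * s * dotv w y + dotv y y
     = \sum_(i < n) (s * w i - y i) ^+ 2.
    rewrite /dotv !mulr_sumr -sumrB -big_split /=; apply: eq_bigr => i _; ring.
  by apply: sumr_ge0 => i _; exact: sqr_ge0.
have := dotv_ge0 w; nra.
Qed.

End H.

Theorem theorem3p3 (R : realType) (n : nat) (P : 'M[R]_n) (w : 'I_n -> R) :
  (0 < n)%N ->
  row_stochastic P ->
  opnormS P < 1 ->
  (forall v : 'I_n -> R, Lobj P v <= Lobj P w) ->
  `|dotv w (fun _ => 1 / Num.sqrt (n%:R))| <= (1 - opnormS P) / 3 * enorm w ->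
  enorm w ^+ 2 <= 2 * n%:R * ln (n%:R : R) / (1 - opnormS P).
Proof.
move=> n0 hP hs1 hmax ha.
set s := opnormS P.
set c := 1 / Num.sqrt (n%:R : R).
set a := dotv w (fun _ => c).
have nR : (0 : R) < n%:R by rewrite ltr0n.
have sq : Num.sqrt (n%:R : R) ^+ 2 = n%:R by rewrite sqr_sqrtr // ltW.
have c2n : c ^+ 2 * n%:R = 1.
  by rewrite /c expr_div_n expr1n sq mul1r mulVf // gt_eqF.
have ha' : c * \sum_(i < n) w i = a.
  by rewrite /a /dotv mulr_sumr; apply: eq_bigr => i _; rewrite mulrC.
have hsw : \sum_(i < n) w i = a * c * n%:R.
  have : a * c * n%:R = (\sum_(i < n) w i) * (c ^+ 2 * n%:R) by rewrite -ha'; ring.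
  by rewrite c2n mulr1 => ->.
set v := fun i => w i - a * c.
have hvs : \sum_(i < n) v i = 0.
  by rewrite /v sumrB sumr_const card_ord hsw mulr_natr subrr.
have hvv : dotv v v <= dotv w w.
  have -> : dotv v v = \sum_(i < n) (w i * w i - 2 * (a * c) * w i + (a * c) ^+ 2).
    by apply: eq_bigr => i _; rewrite /v; ring.
  rewrite big_split sumrB -mulr_sumr sumr_const card_ord /= hsw mulr_natr -/(dotv w w).
  have := mulr_ge0 (sqr_ge0 (a * c)) (ler0n R n).
  nra.
have hPw : forall i, matv P w i = matv P v i + a * c.
  move=> i; case: hP => _ hP1.
  rewrite /matv /v; under [in RHS]eq_bigr => j _ do rewrite mulrBr.
  by rewrite sumrB -mulr_suml hP1 mul1r subrK.
have hdot : dotv w (matv P w) = dotv w (matv P v) + a ^+ 2.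
  rewrite /dotv; under eq_bigr => i _ do rewrite hPw mulrDr.
  rewrite big_split /= -mulr_suml hsw; congr (_ + _).
  have -> : a ^+ 2 = a ^+ 2 * (c ^+ 2 * n%:R) by rewrite c2n mulr1.
  ring.
have hcr : dotv w (matv P v) <= s * dotv w w := cross hP hvs hvv.
have hlog : dotv w w <= \sum_(i < n) ln (\sum_(j < n) expR (w i * w j)).
  rewrite /dotv; apply: ler_sum => i _.
  have hS : expR (w i * w i) <= \sum_(j < n) expR (w i * w j).
    rewrite (bigD1 i) //= lerDl; apply: sumr_ge0 => j _; exact: expR_ge0.
  have Sp : 0 < \sum_(j < n) expR (w i * w j) by apply: lt_le_trans hS; exact: expR_gt0.
  by rewrite -ler_expR lnK // posrE.
have hL0 : Lobj P (fun _ => 0) = - (n%:R * ln (n%:R : R)).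
  rewrite /Lobj /dotv big1 ?add0r; last by move=> i _; rewrite mul0r.
  congr (- _).
  rewrite (eq_bigr (fun _ => ln (n%:R : R))); last first.
    move=> i _; congr ln; rewrite (eq_bigr (fun _ => 1)); last by move=> j _; rewrite mul0r expR0.
    by rewrite sumr_const card_ord.
  by rewrite sumr_const cardT size_enum_ord mulr_natl.
have hL := hmax (fun _ => 0).
rewrite hL0 /Lobj hdot in hL.
have s0 : 0 <= s := opn_ge0 hP.
have s1 : s < 1 by exact: hs1.
have hE : enorm w ^+ 2 = dotv w w := enorm_sq w.
have ha2 : a ^+ 2 <= ((1 - s) / 3) ^+ 2 * dotv w w.
  rewrite -hE -exprMn.
  have K0 : 0 <= (1 - s) / 3 * enorm w.
    by apply: mulr_ge0; [lra | exact: sqrtr_ge0].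
  have ha0 : `|a| <= (1 - s) / 3 * enorm w by exact: ha.
  move: ha0; rewrite ler_norml => /andP [h1 h2].
  nra.
rewrite ler_pdivlMr; last by lra.
rewrite hE.
have X0 := dotv_ge0 w.
have hint : 0 <= dotv w w * (1 - s) * (1 - 2 * (1 - s) / 9).
  apply: mulr_ge0; [apply: mulr_ge0 => //; lra | lra].
nra.
Qed.
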